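(* Let $\mathbf{M}=\mathrm{diag}(\lambda_1,\dots,\lambda_N)$ with $\lambda_1>\lambda_2>\cdots>\lambda_r>\lambda_{r+1}\ge\cdots\ge\lambda_N\ge0$, and let $d_{\min}=\min_{1\le s<j\le r+1}(\lambda_s-\lambda_j)$. Let $\epsilon>0$ and $\mathbf{X}=[\bm{x}_1,\dots,\bm{x}_r]\in\mathrm{St}(N,r)$ with $\|\mathrm{grad}\,g(\mathbf{X})\|_F\le\epsilon$. For each $j\in[r]$ let $i_j\in[N]$ be an index minimizing $|\bm{x}_j^\top\mathbf{M}\bm{x}_j-\lambda_n|$ over $n\in[N]$, and set $\boldsymbol{\Lambda}_\Omega=\mathrm{diag}(\lambda_{i_1},\dots,\lambda_{i_r})$, $\mathbf{X}_\Omega=[\bm{e}_{i_1},\dots,\bm{e}_{i_r}]$. Then (i) $\|\mathbf{X}^\top\mathbf{M}\mathbf{X}-\boldsymbol{\Lambda}_\Omega\|_F\le4\epsilon$; (ii) if $(i_1,\dots,i_r)=(1,\dots,r)$, then there exist signs $s_1,\dots,s_r\in\{\pm1\}$ such that $\|\mathbf{X}-\mathbf{X}_\Omega\,\mathrm{diag}(s_1,\dots,s_r)\|_F\le 12\,d_{\min}^{-1}\epsilon$ (with $s_j=1$ whenever $\mathbf{X}(j,j)\ge0$).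
   Context: $\bm{e}_i$ is the $i$-th standard basis vector of $\mathbb{R}^N$. $\mathrm{St}(N,r)=\{\mathbf{X}\in\mathbb{R}^{N\times r}:\mathbf{X}^\top\mathbf{X}=\mathbf{I}_r\}$, $\mathbf{N}=\mathrm{diag}(r,r-1,\dots,1)$, $g(\mathbf{X})=-\tfrac12\mathrm{tr}(\mathbf{X}^\top\mathbf{M}\mathbf{X}\mathbf{N})$, with Riemannian gradient $\mathrm{grad}\,g(\mathbf{X})=(\mathbf{X}\mathbf{X}^\top-\mathbf{I}_N)\mathbf{M}\mathbf{X}\mathbf{N}-\tfrac12\mathbf{X}[\mathbf{X}^\top\mathbf{M}\mathbf{X},\mathbf{N}]$, where $[\mathbf{A},\mathbf{B}]=\mathbf{A}\mathbf{B}-\mathbf{B}\mathbf{A}$. *)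

(* Defs.v *)
From HB Require Import structures.
From mathcomp Require Import all_boot all_order all_algebra.
Set Implicit Arguments. Unset Strict Implicit. Unset Printing Implicit Defensive.
Import Order.TTheory GRing.Theory Num.Theory.
Local Open Scope ring_scope.

Definition frob (R : rcfType) (m n : nat) (A : 'M[R]_(m, n)) : R :=
  Num.sqrt (\sum_(i < m) \sum_(j < n) A i j ^+ 2).

Definition commx (R : rcfType) (n : nat) (A B : 'M[R]_n) : 'M[R]_n :=
  A *m B - B *m A.

(* M = diag(lam_1..lam_N), stored 0-based: entry i is lam i *)
Definition Mdiag (R : rcfType) (N : nat) (lam : nat -> R) : 'M[R]_N :=
  diag_mx (\row_(i < N) lam i).

(* N = diag(r, r-1, ..., 1) (0-based entry j is r - j) *)
Definition Nweight (R : rcfType) (r : nat) : 'M[R]_r :=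
  diag_mx (\row_(j < r) (r - j)%:R).

(* Riemannian gradient of g(X) = -1/2 tr(X^T M X N) on St(N,r) *)
Definition gradg (R : rcfType) (N r : nat) (M : 'M[R]_N) (X : 'M[R]_(N, r))
  : 'M[R]_(N, r) :=
  (X *m X^T - 1%:M) *m M *m X *m Nweight R r
  - (2%:R)^-1 *: (X *m commx (X^T *m M *m X) (Nweight R r)).

(* d_min = min_{1 <= s < j <= r+1} (lam_s - lam_j), 0-based: 0 <= s < j <= r.
   The seed (lam 0 - lam r) is itself one of the terms (r >= 1). *)
Definition dmin (R : rcfType) (lam : nat -> R) (r : nat) : R :=
  \big[Num.min/(lam 0%N - lam r)]_(0 <= s < r.+1)
     \big[Num.min/(lam 0%N - lam r)]_(s.+1 <= j < r.+1) (lam s - lam j).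

Definition XOmega (R : rcfType) (N r : nat) (idx : 'I_r -> 'I_N) : 'M[R]_(N, r) :=
  \matrix_(i < N, j < r) (i == idx j)%:R.

Definition LamOmega (R : rcfType) (N r : nat) (lam : nat -> R) (idx : 'I_r -> 'I_N)
  : 'M[R]_r := diag_mx (\row_(j < r) lam (idx j)).

(* Main.v *)
Require Import Defs.
From HB Require Import structures.
From mathcomp Require Import all_boot all_order all_algebra.
From mathcomp Require Import ring lra.
Import Order.TTheory GRing.Theory Num.Theory.
Set Implicit Arguments. Unset Strict Implicit. Unset Printing Implicit Defensive.
Local Open Scope ring_scope.

Section Aux.
Variable R : rcfType.

Definition csq m n (P : 'M[R]_(m,n)) (j : 'I_n) : R := (P^T *m P) j j.
Definition sq m n (P : 'M[R]_(m,n)) : R := \sum_j csq P j.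

Lemma csqE m n (P : 'M[R]_(m,n)) j : csq P j = \sum_i P i j ^+ 2.
Proof. rewrite /csq !mxE; apply: eq_bigr => i _; by rewrite mxE expr2. Qed.

Lemma csq_ge0 m n (P : 'M[R]_(m,n)) j : 0 <= csq P j.
Proof. by rewrite csqE sumr_ge0 // => i _; rewrite sqr_ge0. Qed.

Lemma sq_ge0 m n (P : 'M[R]_(m,n)) : 0 <= sq P.
Proof. by rewrite sumr_ge0 // => j _; rewrite csq_ge0. Qed.

Lemma frobE m n (P : 'M[R]_(m,n)) : frob P = Num.sqrt (sq P).
Proof.
rewrite /frob /sq exchange_big; congr Num.sqrt; apply: eq_bigr => j _.
by rewrite csqE.
Qed.

Lemma frob_le m n (P : 'M[R]_(m,n)) c : 0 <= c -> sq P <= c ^+ 2 -> frob P <= c.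
Proof.
move=> hc h; rewrite frobE -(ger0_norm hc) -sqrtr_sqr ler_sqrt //.
exact: sqr_ge0.
Qed.

Lemma frob_sq m n (P : 'M[R]_(m,n)) c : frob P <= c -> sq P <= c ^+ 2.
Proof.
move=> h; have hc : 0 <= c by apply: le_trans h; rewrite frobE sqrtr_ge0.
rewrite -(sqr_sqrtr (sq_ge0 P)) ler_sqr ?nnegrE ?sqrtr_ge0 //.
by rewrite -frobE.
Qed.

Lemma orthM m n k (X : 'M[R]_(m,k)) (P : 'M[R]_(m,n)) (Q : 'M[R]_(k,n)) :
  X^T *m X = 1%:M -> X^T *m P = 0 ->
  (P + X *m Q)^T *m (P + X *m Q) = P^T *m P + Q^T *m Q.
Proof.
move=> hX hP.
have hP' : P^T *m X = 0 by rewrite -[P^T *m X]trmxK trmx_mul trmxK hP trmx0.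
have e1 : P^T *m (X *m Q) = 0 by rewrite mulmxA hP' mul0mx.
have e2 : Q^T *m X^T *m P = 0 by rewrite -mulmxA hP mulmx0.
have e3 : Q^T *m X^T *m (X *m Q) = Q^T *m Q.
  by rewrite -mulmxA (mulmxA X^T) hX mul1mx.
have -> : (P + X *m Q)^T = P^T + (X *m Q)^T by apply/matrixP => i j; rewrite !mxE.
by rewrite trmx_mul mulmxDl !mulmxDr e1 e2 e3 addr0 add0r.
Qed.

Lemma sq_orth m n k (X : 'M[R]_(m,k)) (P : 'M[R]_(m,n)) (Q : 'M[R]_(k,n)) :
  X^T *m X = 1%:M -> X^T *m P = 0 -> sq (P + X *m Q) = sq P + sq Q.
Proof.
move=> hX hP; rewrite /sq -big_split; apply: eq_bigr => j _.
by rewrite /csq orthM // mxE.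
Qed.

Lemma sqN m n (P : 'M[R]_(m,n)) : sq (- P) = sq P.
Proof. apply: eq_bigr => j _; rewrite !csqE; apply: eq_bigr => i _; by rewrite mxE sqrrN. Qed.

Lemma sqZ m n (a : R) (P : 'M[R]_(m,n)) : sq (a *: P) = a ^+ 2 * sq P.
Proof.
rewrite /sq mulr_sumr; apply: eq_bigr => j _; rewrite !csqE mulr_sumr.
by apply: eq_bigr => i _; rewrite mxE exprMn.
Qed.

Lemma sqr_le_norm (a b : R) : `|a| <= `|b| -> a^+2 <= b^+2.
Proof.
move=> h. by rewrite -real_normK ?num_real // -[b^+2]real_normK ?num_real // ler_sqr // nnegrE.
Qed.

Lemma gap_aux (a b d : R) : 0 < d -> (d <= b - a) || (d <= a - b) -> a^+2 <= b^+2 -> d^+2 <= 4 * b^+2.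
Proof.
move=> h1 /orP[] h2 h3.
  have h4 : d^+2 <= (b-a)^+2 by nra.
  have h5 : 0 <= (a+b)^+2 by nra.
  nra.
have h4 : d^+2 <= (a-b)^+2 by nra.
have h5 : 0 <= (a+b)^+2 by nra.
nra.
Qed.

Lemma aux_sq1 (a d : R) : 1 <= d^+2 -> a^+2 <= (a*d)^+2.
Proof. move=> h; rewrite exprMn; have := sqr_ge0 a; nra. Qed.

Lemma aux_sq2 (a d : R) : 1 <= d -> a^+2 <= (a*d)^+2.
Proof. move=> h; apply: aux_sq1; nra. Qed.

Lemma aux_d1 (x y : R) : (x + 1 <= y) || (y + 1 <= x) -> 1 <= (x - y)^+2.
Proof.
case/orP=> h.
  have e : (x-y)^+2 - 1 = (y-x-1)*(y-x+1) by ring.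
  by rewrite -subr_ge0 e; apply: mulr_ge0; lra.
have e : (x-y)^+2 - 1 = (x-y-1)*(x-y+1) by ring.
by rewrite -subr_ge0 e; apply: mulr_ge0; lra.
Qed.

Lemma aux_lin1 (sW sD sWN sC e : R) : sW <= sWN -> sD <= sC -> sWN + sC / 4%:R <= e ->
  0 <= sC -> 0 <= sWN -> sW + sD <= 4%:R * e.
Proof. move=> *; lra. Qed.

Lemma aux_lin2 (sE sD sC sWN e : R) : sE <= 4%:R * e -> sD <= sC -> sWN + sC / 4%:R <= e ->
  0 <= sWN -> 0 <= sC -> sE + sD <= 16%:R * e.
Proof. move=> *; lra. Qed.

Lemma aux_sign (a t : R) : 0 <= t -> 1 = a^+2 + t ->
  (a - (if 0 <= a then 1 else -1))^+2 <= t.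
Proof.
move=> ht h; case: (lerP 0 a) => ha.
  nra.
rewrite opprK; nra.
Qed.

Lemma aux_fin (S d e : R) : 0 < d -> d^+2 * S <= 32%:R * e^+2 ->
  S <= (12%:R * d^-1 * e)^+2.
Proof.
move=> hd h; have hd2 : 0 < d^+2 by apply: exprn_gt0.
rewrite -(ler_pM2l hd2).
have -> : d^+2 * (12%:R * d^-1 * e)^+2 = 144%:R * e^+2.
  by field; rewrite gt_eqF.
have := sqr_ge0 e; lra.
Qed.

End Aux.

Unset Implicit Arguments.

Theorem lemmaC1 (R : rcfType) (N r : nat) (lam : nat -> R)
  (hr1 : (1 <= r)%N) (hrN : (r < N)%N)
  (hdec : forall i j : nat, (i < j)%N -> (j < N)%N -> lam j <= lam i)
  (hstrict : forall i j : nat, (i < j)%N -> (j <= r)%N -> lam j < lam i)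
  (hnneg : forall i : nat, (i < N)%N -> 0 <= lam i)
  (eps : R) (heps : 0 < eps)
  (X : 'M[R]_(N, r)) (hSt : X^T *m X = 1%:M)
  (hgrad : frob (gradg (Mdiag N lam) X) <= eps)
  (idx : 'I_r -> 'I_N)
  (hidx : forall (j : 'I_r) (n : 'I_N),
     `|(X^T *m Mdiag N lam *m X) j j - lam (idx j)|
       <= `|(X^T *m Mdiag N lam *m X) j j - lam n|) :
  frob (X^T *m Mdiag N lam *m X - LamOmega lam idx) <= 4%:R * eps
  /\ ((forall j : 'I_r, nat_of_ord (idx j) = nat_of_ord j) ->
      exists s : 'I_r -> R,
        (forall j, s j = 1 \/ s j = -1)
        /\ (forall j, 0 <= X (idx j) j -> s j = 1)
        /\ frob (X - XOmega R idx *m diag_mx (\row_(j < r) s j))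
             <= 12%:R * (dmin lam r)^-1 * eps).
Proof.
set M := Mdiag N lam in hgrad hidx *.
set A := X^T *m M *m X in hidx *.
set W := M *m X - X *m A.
set Nw := Nweight R r.
set C := commx A Nw.
set dA := diag_mx (\row_(j < r) A j j).
set D := A - dA.
set E := M *m X - X *m dA.
have hXW : X^T *m W = 0 by rewrite /W mulmxBr !mulmxA hSt mul1mx subrr.
have hgradE : gradg M X = (- (W *m Nw)) + X *m (- (2%:R^-1) *: C).
  rewrite /gradg -/Nw -/A -/C -scalemxAr scaleNr; congr (_ - _).
  by rewrite -mulNmx /W /A opprB !mulmxBl mul1mx !mulmxA.
have hC : forall i j, C i j = A i j * ((r - j)%:R - (r - i)%:R).
  move=> i j; rewrite /C /commx /Nw /Nweight mul_mx_diag mul_diag_mx !mxE; ring.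
have hWN : forall i j, (W *m Nw) i j = W i j * (r - j)%:R.
  by move=> i j; rewrite /Nw /Nweight mul_mx_diag !mxE.
have hE : forall n j, E n j = (lam n - A j j) * X n j.
  move=> n j; rewrite /E /M /Mdiag /dA mul_diag_mx mul_mx_diag !mxE; ring.
have hD : forall i j, D i j = if i == j then 0 else A i j.
  move=> i j; rewrite /D /dA !mxE; by case: eqP => [->|]; rewrite ?mulr1n ?subrr ?mulr0n ?subr0.
have hEWD : E = W + X *m D by rewrite /E /W /D mulmxBr addrA subrK.
have hsq : sq (W *m Nw) + sq C / 4%:R <= eps ^+ 2.
  have hX' : X^T *m (- (W *m Nw)) = 0 by rewrite mulmxN mulmxA hXW mul0mx oppr0.
  have := frob_sq hgrad; rewrite hgradE (sq_orth _ hSt hX').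
  by rewrite sqN sqZ sqrrN exprVn -natrX mulrC.
have hDC : sq D <= sq C.
  apply: ler_sum => j _; rewrite !csqE; apply: ler_sum => i _.
  rewrite hD hC.
  case: eqP => [_|/eqP hij]; first by rewrite expr2 mul0r sqr_ge0.
  have hd : 1 <= ((r - j)%:R - (r - i)%:R : R)^+2.
    rewrite (natrB _ (ltnW (ltn_ord j))) (natrB _ (ltnW (ltn_ord i))).
    have -> : r%:R - j%:R - (r%:R - i%:R) = (i%:R - j%:R : R) by ring.
    apply: aux_d1; rewrite !natr1 !ler_nat.
    case: (ltngtP i j) => hl; rewrite ?hl ?orbT //.
    by move/val_inj: hl hij => ->; rewrite eqxx.
  exact: aux_sq1.
have hWW : sq W <= sq (W *m Nw).
  apply: ler_sum => j _; rewrite !csqE; apply: ler_sum => i _; rewrite hWN.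
  have hd : (1 <= (r - j)%:R :> R) by rewrite ler1n subn_gt0.
  exact: aux_sq2.
have hEs : forall j, csq E j = csq W j + csq D j.
  by move=> j; rewrite hEWD /csq orthM // mxE.
have hsE : sq E <= 4%:R * eps ^+ 2.
  have -> : sq E = sq W + sq D by rewrite /sq -big_split; apply: eq_bigr => j _.
  exact: (aux_lin1 hWW hDC hsq (sq_ge0 C) (sq_ge0 _)).
have hcolX : forall j, csq X j = 1.
  by move=> j; rewrite /csq hSt mxE eqxx.
have hmin : forall j, (A j j - lam (idx j)) ^+ 2 <= csq E j.
  move=> j; rewrite -[_ ^+ 2]mulr1 -(hcolX j) !csqE mulr_sumr.
  apply: ler_sum => n _; rewrite hE exprMn.
  apply: ler_wpM2r; first exact: sqr_ge0.
  apply: sqr_le_norm.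
  by rewrite [X in _ <= X]distrC; exact: hidx.
have hAL : forall i j, (A - LamOmega lam idx) i j = A i j - lam (idx i) *+ (i == j).
  by move=> i j; rewrite /LamOmega !mxE.
have hcolAL : forall j, csq (A - LamOmega lam idx) j = (A j j - lam (idx j)) ^+ 2 + csq D j.
  move=> j; rewrite !csqE (bigD1 j) //= [in RHS](bigD1 j) //= hD eqxx.
  rewrite [0 ^+ 2]expr2 mul0r add0r; congr (_ ^+ 2 + _).
    by rewrite hAL eqxx mulr1n.
  by apply: eq_bigr => i hi; rewrite hD (negbTE hi) hAL (negbTE hi) mulr0n subr0.
have hi : sq (A - LamOmega lam idx) <= (4%:R * eps) ^+ 2.
  apply: le_trans (_ : sq E + sq D <= _).
    rewrite /sq -big_split; apply: ler_sum => j _; rewrite hcolAL lerD2r; exact: hmin.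
  rewrite exprMn -natrX; exact: (aux_lin2 hsE hDC hsq (sq_ge0 _) (sq_ge0 _)).
split.
  apply: frob_le => //; first by apply: mulr_ge0 => //; exact: ltW.
move=> hid.
have hdpos : 0 < dmin lam r.
  rewrite /dmin; apply: lt_bigmin => [|s0 _]; first by rewrite subr_gt0 hstrict.
  rewrite big_nat_cond; apply: lt_bigmin => [|t /andP[/andP[hst htr] _]].
    by rewrite subr_gt0 hstrict.
  by rewrite subr_gt0 hstrict.
have hdle : forall s0 t, (s0 < t)%N -> (t <= r)%N -> dmin lam r <= lam s0 - lam t.
  move=> s0 t hst htr; rewrite /dmin.
  apply: (bigmin_inf_seq _ s0) => //.
    by rewrite mem_index_iota /= ltnS (leq_trans (ltnW hst) htr).
  apply: (bigmin_inf_seq _ t) => //.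
  by rewrite mem_index_iota hst ltnS htr.
have hgap : forall (j : 'I_r) (n : 'I_N), n != idx j ->
    dmin lam r ^+ 2 <= 4%:R * (lam n - A j j) ^+ 2.
  move=> j n hn.
  have hnj : (n : nat) != j.
    apply/eqP => e; move/eqP: hn; apply; apply: val_inj; by rewrite /= e hid.
  have hab : (A j j - lam j) ^+ 2 <= (A j j - lam n) ^+ 2.
    by apply: sqr_le_norm; have := hidx j n; rewrite (hid j).
  rewrite -[(lam n - A j j)^+2]sqrrN opprB; apply: (gap_aux hdpos _ hab).
  have e1 : A j j - lam n - (A j j - lam j) = lam j - lam n by ring.
  have e2 : A j j - lam j - (A j j - lam n) = lam n - lam j by ring.
  rewrite e1 e2.
  case: (ltngtP n j) hnj => // hl _.
    by rewrite (hdle n j hl (ltnW (ltn_ord j))) orbT.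
  case: (leqP n r) => hnr; first by rewrite (hdle j n hl hnr).
  apply/orP; left; apply: le_trans (hdle j r (ltn_ord j) (leqnn r)) _.
  by rewrite lerD2l lerN2; apply: hdec.
pose sg := fun j : 'I_r => if 0 <= X (idx j) j then 1 else -1 : R.
exists sg; split.
  by move=> j; rewrite /sg; case: ifP => _; [left|right].
split; first by move=> j; rewrite /sg => ->.
set B := X - XOmega R idx *m diag_mx (\row_j sg j).
have hXO : forall n j, (XOmega R idx *m diag_mx (\row_j sg j)) n j = (n == idx j)%:R * sg j.
  by move=> n j; rewrite mul_mx_diag !mxE.
have hB : forall n j, B n j = X n j - (n == idx j)%:R * sg j.
  by move=> n j; rewrite -hXO !mxE.
pose t := fun j : 'I_r => \sum_(n < N | n != idx j) X n j ^+ 2.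
have ht0 : forall j, 0 <= t j.
  by move=> j; apply: sumr_ge0 => n _; apply: sqr_ge0.
have hsplit : forall j, 1 = X (idx j) j ^+ 2 + t j.
  by move=> j; rewrite -(hcolX j) csqE (bigD1 (idx j)).
have hcolB : forall j, csq B j <= 2%:R * t j.
  move=> j; rewrite csqE (bigD1 (idx j)) //= hB eqxx mul1r.
  have -> : \sum_(n < N | n != idx j) B n j ^+ 2 = t j.
    by apply: eq_bigr => n hn; rewrite hB (negbTE hn) mul0r subr0.
  have := aux_sign (ht0 j) (hsplit j); rewrite -/(sg j); lra.
have hdt : forall j, dmin lam r ^+ 2 * t j <= 4%:R * csq E j.
  move=> j.
  have h1 : dmin lam r ^+ 2 * t j <= 4%:R * \sum_(n < N | n != idx j) E n j ^+ 2.
    rewrite /t mulr_sumr [X in _ <= X]mulr_sumr; apply: ler_sum => n hn.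
    rewrite hE exprMn [X in _ <= X]mulrA; apply: ler_wpM2r; first exact: sqr_ge0.
    exact: hgap.
  apply: (le_trans h1).
  rewrite ler_pM2l ?ltr0n // csqE [X in _ <= X](bigD1 (idx j)) //= lerDr; exact: sqr_ge0.
apply: frob_le.
  by apply: mulr_ge0; [apply: mulr_ge0 => //; rewrite invr_ge0 ltW | exact: ltW].
apply: aux_fin => //.
apply: le_trans (_ : 8%:R * sq E <= _); last first.
  have -> : (32%:R : R) = 8%:R * 4%:R by rewrite -natrM.
  by rewrite -mulrA ler_pM2l ?ltr0n.
rewrite /sq !mulr_sumr; apply: ler_sum => j _.
have := hcolB j; have := hdt j; have := sqr_ge0 (dmin lam r).
move: (csq B j) (t j) (csq E j) (dmin lam r ^+ 2) => b tt e d2 *; nra.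
Qed.
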